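(* Let $G=(V,D,B)$ be a mixed graph, $v\in V$, and $Y\subseteq V\setminus(\{v\}\cup\mathrm{sib}(v))$ with $|Y|=|\mathrm{pa}(v)|=n$. Write $Y=\{y_1,\dots,y_n\}$, $\mathrm{pa}(v)=\{p_1,\dots,p_n\}$, and for $(\Lambda,\Omega)\in\Theta$ with $\Sigma=\phi_G(\Lambda,\Omega)$ define the $n\times n$ matrix $\mathbf{A}$ by $\mathbf{A}_{ij}=[(I-\Lambda)^T\Sigma]_{y_ip_j}$ if $y_i\in\mathrm{htr}(v)$ and $\mathbf{A}_{ij}=\Sigma_{y_ip_j}$ if $y_i\notin\mathrm{htr}(v)$. If $Y$ satisfies the half-trek criterion with respect to $v$, then $\mathbf{A}$ is generically invertible, i.e. $\det\mathbf{A}$, as a function of $(\Lambda,\Omega)\in\Theta$, is nonzero outside a proper algebraic subset of $\Theta$.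
   Context: A mixed graph is $G=(V,D,B)$ with $V=[m]$, $D$ directed edges $v\to w$, $B$ symmetric bidirected edges $v\leftrightarrow w$, no self-loops. $\mathrm{pa}(v)=\{w:w\to v\in D\}$, $\mathrm{sib}(v)=\{w:w\leftrightarrow v\in B\}$. $\mathbb{R}^D_{\mathrm{reg}}$: real $m\times m$ $\Lambda$ with $\lambda_{vw}=0$ for $v\to w\notin D$ and $I-\Lambda$ invertible; $\mathrm{PD}(B)$: positive definite symmetric $\Omega$ with $\omega_{vw}=0$ for $v\ne w$, $v\leftrightarrow w\notin B$; $\Theta=\mathbb{R}^D_{\mathrm{reg}}\times\mathrm{PD}(B)$; $\phi_G(\Lambda,\Omega)=(I-\Lambda)^{-T}\Omega(I-\Lambda)^{-1}$. A proper algebraic subset of $\Theta$ is the zero set in $\Theta$ of polynomials in the entries, not all of $\Theta$. A half-trek from $y$ to $w$ is a path $y\leftrightarrow w_0\to w_1\to\cdots\to w_r=w$ (left side $\{y\}$, right side $\{w_0,\dots,w_r\}$) or $y\to w_1\to\cdots\to w_r=w$, $r\ge0$ (left side $\{y\}$, right side $\{y,w_1,\dots,w_r\}$); nodes may repeat. $\mathrm{htr}(v)$ is the set of $w\in V\setminus(\{v\}\cup\mathrm{sib}(v))$ reachable from $v$ by a half-trek. A system of half-treks from $X$ to $Y$: half-treks with distinct sources forming $X$ and distinct targets forming $Y$; no sided intersection: pairwise disjoint left sides and pairwise disjoint right sides. $Y$ satisfies the half-trek criterion w.r.t. $v$ if $|Y|=|\mathrm{pa}(v)|$, $Y\cap(\{v\}\cup\mathrm{sib}(v))=\emptyset$,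 and there is a system of half-treks with no sided intersection from $Y$ to $\mathrm{pa}(v)$. *)

(* Defs.v *)
From HB Require Import structures.
From mathcomp Require Import all_boot all_order all_algebra.
Set Implicit Arguments. Unset Strict Implicit. Unset Printing Implicit Defensive.
Import Order.TTheory GRing.Theory Num.Theory.
Local Open Scope ring_scope.

(* D i j  <->  directed edge i -> j ;  B i j <-> bidirected edge i <-> j *)
Definition mixed_graph (m : nat) (D B : rel 'I_m) : Prop :=
  irreflexive D /\ irreflexive B /\ symmetric B.

Definition pa (m : nat) (D : rel 'I_m) (v : 'I_m) : {set 'I_m} := [set w | D w v].
Definition sib (m : nat) (B : rel 'I_m) (v : 'I_m) : {set 'I_m} := [set w | B w v].

(* A half-trek with source y is encoded by its right side rs = h :: t:
   either h = y (directed half-trek y -> w1 -> ... -> wr, rs = y :: w1 .. wr)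
   or y <-> h (half-trek y <-> w0 -> w1 -> ... -> wr, rs = w0 :: w1 .. wr);
   in both cases h -> t1 -> t2 -> ... must be directed edges. *)
Definition half_trek (m : nat) (D B : rel 'I_m) (y : 'I_m) (rs : seq 'I_m) : bool :=
  if rs is h :: t then ((h == y) || B y h) && path D h t else false.

Definition ht_target (m : nat) (y : 'I_m) (rs : seq 'I_m) : 'I_m := last y rs.
Definition ht_left (m : nat) (y : 'I_m) (rs : seq 'I_m) : seq 'I_m := [:: y].
Definition ht_right (m : nat) (y : 'I_m) (rs : seq 'I_m) : seq 'I_m := rs.

Definition htr (m : nat) (D B : rel 'I_m) (v w : 'I_m) : Prop :=
  w != v /\ ~~ B v w /\ exists rs, half_trek D B v rs /\ ht_target v rs = w.

Definition ht_system (m : nat) (D B : rel 'I_m) (X Y : {set 'I_m}) : Prop :=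
  exists s : seq ('I_m * seq 'I_m),
    all (fun t => half_trek D B t.1 t.2) s /\
    uniq (map fst s) /\ [set x in map fst s] = X /\
    uniq (map (fun t => ht_target t.1 t.2) s) /\
    [set x in map (fun t => ht_target t.1 t.2) s] = Y /\
    pairwise (fun a b => [disjoint ht_left a.1 a.2 & ht_left b.1 b.2]) s /\
    pairwise (fun a b => [disjoint ht_right a.1 a.2 & ht_right b.1 b.2]) s.

Definition HTC (m : nat) (D B : rel 'I_m) (v : 'I_m) (Y : {set 'I_m}) : Prop :=
  #|Y| = #|pa D v| /\ Y :&: (v |: sib B v) = set0 /\ ht_system D B Y (pa D v).

Definition in_RDreg (R : realFieldType) (m : nat) (D : rel 'I_m) (L : 'M[R]_m) : Prop :=
  (forall i j, ~~ D i j -> L i j = 0) /\ (1%:M - L) \in unitmx.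

Definition in_PD (R : realFieldType) (m : nat) (B : rel 'I_m) (O : 'M[R]_m) : Prop :=
  O^T = O /\ (forall i j, i != j -> ~~ B i j -> O i j = 0) /\
  (forall x : 'cV[R]_m, x != 0 -> 0 < (x^T *m O *m x) ord0 ord0).

Definition in_Theta (R : realFieldType) (m : nat) (D B : rel 'I_m) (L O : 'M[R]_m) : Prop :=
  in_RDreg D L /\ in_PD B O.

Definition Sigma (R : realFieldType) (m : nat) (L O : 'M[R]_m) : 'M[R]_m :=
  (invmx (1%:M - L))^T *m O *m invmx (1%:M - L).

Inductive mpoly (R : Type) (X : Type) : Type :=
| MConst of R
| MVar of X
| MAdd of mpoly R X & mpoly R X
| MMul of mpoly R X & mpoly R X.

Fixpoint meval (R : pzRingType) (X : Type) (e : X -> R) (p : mpoly R X) : R :=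
  match p with
  | MConst c => c
  | MVar x => e x
  | MAdd p q => meval e p + meval e q
  | MMul p q => meval e p * meval e q
  end.

Definition theta_var (m : nat) : Type := (('I_m * 'I_m) + ('I_m * 'I_m))%type.

Definition theta_env (R : realFieldType) (m : nat) (L O : 'M[R]_m) (x : theta_var m) : R :=
  match x with inl (i, j) => L i j | inr (i, j) => O i j end.

(* f is nonzero outside a proper algebraic subset of Theta: there are
   polynomials ps whose zero set in Theta is not all of Theta, and f is
   nonzero at every point of Theta outside that zero set. *)
Definition generically_nonzero (R : realFieldType) (m : nat) (D B : rel 'I_m)
    (f : 'M[R]_m -> 'M[R]_m -> R) : Prop :=
  exists ps : seq (mpoly R (theta_var m)),
    (exists L O, in_Theta D B L O /\ has (fun p => meval (theta_env L O) p != 0) ps) /\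
    (forall L O, in_Theta D B L O ->
       has (fun p => meval (theta_env L O) p != 0) ps -> f L O != 0).

(* Main.v *)
Require Import Defs.
From HB Require Import structures.
From mathcomp Require Import all_boot all_order all_algebra.
From mathcomp Require Import zify.
Import Order.TTheory GRing.Theory Num.Theory.
Set Implicit Arguments. Unset Strict Implicit. Unset Printing Implicit Defensive.

Module PolyPart.
Local Open Scope ring_scope.


Section Poly.
Variables (R : realFieldType) (m : nat).
Definition ispoly (f : 'M[R]_m -> 'M[R]_m -> R) :=
  exists q : mpoly R (theta_var m), forall L O, meval (theta_env L O) q = f L O.

Lemma ispoly_ext f g : (forall L O, f L O = g L O) -> ispoly f -> ispoly g.
Proof. by move=> e [q hq]; exists q => L O; rewrite hq e. Qed.
Lemma ispoly_const c : ispoly (fun _ _ => c).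
Proof. by exists (MConst _ c). Qed.
Lemma ispoly_L i j : ispoly (fun L _ => L i j).
Proof. by exists (MVar _ (inl (i, j))). Qed.
Lemma ispoly_O i j : ispoly (fun _ O => O i j).
Proof. by exists (MVar _ (inr (i, j))). Qed.
Lemma ispoly_add f g : ispoly f -> ispoly g -> ispoly (fun L O => f L O + g L O).
Proof. by move=> [p hp] [q hq]; exists (MAdd p q) => L O /=; rewrite hp hq. Qed.
Lemma ispoly_mul f g : ispoly f -> ispoly g -> ispoly (fun L O => f L O * g L O).
Proof. by move=> [p hp] [q hq]; exists (MMul p q) => L O /=; rewrite hp hq. Qed.
Lemma ispoly_opp f : ispoly f -> ispoly (fun L O => - f L O).
Proof.
move=> h; apply: ispoly_ext (ispoly_mul (ispoly_const (-1)) h) => L O.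
by rewrite mulN1r.
Qed.
Lemma ispoly_sum (I : Type) (s : seq I) (F : I -> 'M[R]_m -> 'M[R]_m -> R) :
  (forall x, ispoly (F x)) -> ispoly (fun L O => \sum_(x <- s) F x L O).
Proof.
move=> h; elim: s => [|x s IH].
  by apply: ispoly_ext (ispoly_const 0) => L O; rewrite big_nil.
by apply: ispoly_ext (ispoly_add (h x) IH) => L O; rewrite big_cons.
Qed.
Lemma ispoly_prod (I : Type) (s : seq I) (F : I -> 'M[R]_m -> 'M[R]_m -> R) :
  (forall x, ispoly (F x)) -> ispoly (fun L O => \prod_(x <- s) F x L O).
Proof.
move=> h; elim: s => [|x s IH].
  by apply: ispoly_ext (ispoly_const 1) => L O; rewrite big_nil.
by apply: ispoly_ext (ispoly_mul (h x) IH) => L O; rewrite big_cons.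
Qed.

Definition ispolyM k l (F : 'M[R]_m -> 'M[R]_m -> 'M[R]_(k, l)) :=
  forall i j, ispoly (fun L O => F L O i j).

Lemma ispoly_det k (F : 'M[R]_m -> 'M[R]_m -> 'M[R]_k) :
  ispolyM F -> ispoly (fun L O => \det (F L O)).
Proof.
move=> h; rewrite /determinant; apply: ispoly_sum => s.
apply: ispoly_mul; first exact: ispoly_const.
by apply: ispoly_prod => i; apply: h.
Qed.

Lemma ispolyM_mul k l q (F : _ -> _ -> 'M[R]_(k, l)) (G : _ -> _ -> 'M[R]_(l, q)) :
  ispolyM F -> ispolyM G -> ispolyM (fun L O => F L O *m G L O).
Proof.
move=> hF hG i j; apply: ispoly_ext (ispoly_sum (index_enum _)
   (fun x => ispoly_mul (hF i x) (hG x j))) => L O.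
by rewrite mxE.
Qed.
Lemma ispolyM_tr k l (F : _ -> _ -> 'M[R]_(k, l)) :
  ispolyM F -> ispolyM (fun L O => (F L O)^T).
Proof. by move=> h i j; apply: ispoly_ext (h j i) => L O; rewrite mxE. Qed.
Lemma ispolyM_adj k (F : _ -> _ -> 'M[R]_k) :
  ispolyM F -> ispolyM (fun L O => \adj (F L O)).
Proof.
move=> h i j; apply: ispoly_ext (ispoly_mul (ispoly_const ((-1) ^+ (j + i)))
  (@ispoly_det _ (fun L O => row' j (col' i (F L O))) _)) => [L O|].
  by rewrite mxE.
by move=> a b; apply: ispoly_ext (h _ _) => L O; rewrite !mxE.
Qed.
Lemma ispolyM_IL : ispolyM (fun L (O : 'M[R]_m) => 1%:M - L).
Proof.
move=> i j; apply: ispoly_ext (ispoly_add (ispoly_const ((i == j)%:R))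
   (ispoly_opp (ispoly_L i j))) => L O.
by rewrite !mxE.
Qed.
Lemma ispolyM_O : ispolyM (fun (L : 'M[R]_m) O => O).
Proof. exact: ispoly_O. Qed.
End Poly.



Lemma gen_of_point (R : realFieldType) m (D B : rel 'I_m) (n : nat)
   (F G : 'M[R]_m -> 'M[R]_m -> R) :
  ispoly G ->
  (forall L O, in_Theta D B L O -> G L O = (\det (1%:M - L)) ^+ (2 * n) * F L O) ->
  (exists L O, in_Theta D B L O /\ F L O != 0) ->
  generically_nonzero D B F.
Proof.
move=> [q hq] hGF [L0 [O0 [hT hF]]]; exists [:: q]; split.
  exists L0, O0; split => //=; rewrite orbF hq hGF //.
  rewrite mulf_neq0 // expf_neq0 //.
  by case: hT => [[_ hu] _]; move: hu; rewrite unitmxE unitfE.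
move=> L O hT2 /=; rewrite orbF hq hGF //.
by apply: contra => /eqP ->; rewrite mulr0.
Qed.

Section GF.
Variables (R : realFieldType) (m n : nat) (y p : 'I_n -> 'I_m) (H : {set 'I_m}).

Definition Fmat (L O : 'M[R]_m) :=
    \matrix_(i < n, j < n)
            if y i \in H then ((1%:M - L)^T *m Sigma L O) (y i) (p j)
            else Sigma L O (y i) (p j).

Definition Gmat (L O : 'M[R]_m) :=
    \matrix_(i < n, j < n)
            if y i \in H then \det (1%:M - L) * (O *m \adj (1%:M - L)) (y i) (p j)
            else ((\adj (1%:M - L))^T *m O *m \adj (1%:M - L)) (y i) (p j).

Lemma Gmat_poly : ispoly (fun L O => \det (Gmat L O)).
Proof.
apply: ispoly_det => i j.
have h1 := ispolyM_adj (@ispolyM_IL R m).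
have h2 := ispolyM_mul (@ispolyM_O R m) h1.
have h3 := ispolyM_mul (ispolyM_mul (ispolyM_tr h1) (@ispolyM_O R m)) h1.
case: (boolP (y i \in H)) => hy.
  apply: ispoly_ext (ispoly_mul (ispoly_det (@ispolyM_IL R m)) (h2 (y i) (p j))).
  by move=> L O; rewrite /Gmat [RHS]mxE hy.
by apply: ispoly_ext (h3 (y i) (p j)) => L O; rewrite /Gmat [RHS]mxE (negbTE hy).
Qed.

Lemma GF_rel L O : (1%:M - L) \in unitmx ->
  \det (Gmat L O) = (\det (1%:M - L)) ^+ (2 * n) * \det (Fmat L O).
Proof.
move=> hu; set d := \det (1%:M - L).
have hd : d != 0 by move: hu; rewrite unitmxE unitfE.
have hinv : invmx (1%:M - L) = d^-1 *: \adj (1%:M - L) by rewrite /invmx hu.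
suff -> : Gmat L O = (d ^+ 2) *: Fmat L O by rewrite detZ exprM.
have e1 : (1%:M - L)^T *m Sigma L O = O *m invmx (1%:M - L).
  rewrite /Sigma !mulmxA -trmx_mul mulVmx // trmx1 mul1mx //.
have tZ : (d^-1 *: \adj (1%:M - L))^T = d^-1 *: (\adj (1%:M - L))^T by apply/matrixP => a b; rewrite !mxE.
rewrite /Fmat e1 /Sigma hinv linearZ /= tZ -scalemxAl -!scalemxAr -!scalemxAl scalerA.
apply/matrixP => i j; rewrite !mxE.
case: ifP => _.
  by rewrite -/d expr2 -mulrA mulVKf.
by rewrite -/d mulrA -expr2 -exprMn mulfV // expr1n mul1r.
Qed.
End GF.

End PolyPart.
Import PolyPart.

Section Sys.
Variables (m : nat) (D B : rel 'I_m) (n : nat) (y : 'I_n -> 'I_m) (T : {set 'I_m}).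
Hypothesis yinj : injective y.

Definition good (r : 'I_n -> seq 'I_m) : Prop :=
  [/\ forall i, half_trek D B (y i) (r i),
      forall i, uniq (r i),
      forall i j x, x \in r i -> x \in r j -> i = j &
      forall i, last (y i) (r i) \in T].

Definition hd (r : 'I_n -> seq 'I_m) k := head (y k) (r k).
Definition mu (r : 'I_n -> seq 'I_m) := \sum_i (size (r i) + (hd r i != y i)).
Definition relr (r : 'I_n -> seq 'I_m) : rel 'I_n :=
  fun k k' => (hd r k != y k) && (y k \in r k').
Definition acyc (r : 'I_n -> seq 'I_m) :=
  [forall k, forall k', relr r k k' ==> ~~ connect (relr r) k' k].

Lemma path_drop_nth (e : rel 'I_m) x0 h t i : path e h t -> i < size (h :: t) ->
  path e (nth x0 (h :: t) i) (drop i.+1 (h :: t)).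
Proof.
elim: t h i => [|a t IH] h [|i] //=.
by move=> /andP[_ pt] hi; apply: IH.
Qed.

Lemma last_drop (A : Type) (x0 x1 : A) s i : i < size s -> last x0 (drop i s) = last x1 s.
Proof. by elim: s i x0 x1 => [|a s IH] [|i] x0 x1 //= hi; apply: IH. Qed.

Lemma rotate r k k' : good r -> relr r k k' -> connect (relr r) k' k ->
  exists r', good r' /\ mu r' < mu r.
Proof.
move=> [g1 g2 g3 g4] hkk /connectP [s ps lst].
case: (shortenP ps) lst => s' ps' us' _ lst.
set cyc := k' :: s'.
have cc : cycle (relr r) cyc by rewrite /cycle /= rcons_path ps' -lst hkk.
have hnext x : x \in cyc -> relr r x (next cyc x) by move=> hx; exact: next_cycle cc hx.
have ninj : injective (next cyc) := can_inj (prev_next us').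
pose r' := fun x => if x \in cyc then drop (index (y x) (r (next cyc x))) (r (next cyc x))
                    else r x.
have hsub x : {subset r' x <= r (next cyc x)}.
  rewrite /r'; case: ifP => hx z; first exact: mem_drop.
  by rewrite (next_nth) hx.
have hy x : x \in cyc -> y x \in r (next cyc x) by move=> /hnext /andP[].
have hdrop x : x \in cyc -> r' x = y x :: drop (index (y x) (r (next cyc x))).+1 (r (next cyc x)).
  move=> hx; rewrite /r' hx (drop_nth (y x)) ?index_mem ?hy // nth_index // hy //.
exists r'; split; first split.
- move=> x; case hx: (x \in cyc); last by rewrite /r' hx.
  rewrite hdrop // /half_trek eqxx /=.
  have := g1 (next cyc x); rewrite /half_trek.
  case E: (r (next cyc x)) => [|h t] // /andP[_ pt].
  have := @path_drop_nth D (y x) h t (index (y x) (h :: t)) pt.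
  rewrite nth_index -?E ?index_mem ?hy //; by apply.
- move=> x; rewrite /r'; case: ifP => _; [exact: drop_uniq | exact: g2].
- move=> i j x hi hj; apply: ninj; exact: g3 (hsub _ _ hi) (hsub _ _ hj).
- move=> x; case hx: (x \in cyc); last by rewrite /r' hx.
  rewrite /r' hx (last_drop _ (y (next cyc x))) ?index_mem ?hy //.
have hmu x : x \in cyc -> size (r' x) + (hd r' x != y x) <
     size (r (next cyc x)) + (hd r (next cyc x) != y (next cyc x)).
  move=> hx; have /andP[hb _] := hnext _ (etrans (mem_next cyc x) hx).
  have hi := hy _ hx; rewrite -index_mem in hi.
  move: hi; rewrite hb /hd hdrop //= eqxx addn0 addn1 ltnS size_drop; lia.
have hmu0 x : x \notin cyc -> size (r' x) + (hd r' x != y x) =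
     size (r (next cyc x)) + (hd r (next cyc x) != y (next cyc x)).
  by move=> hx; rewrite /hd /r' (negbTE hx) next_nth (negbTE hx).
have hle x : size (r' x) + (hd r' x != y x) <=
     size (r (next cyc x)) + (hd r (next cyc x) != y (next cyc x)).
  by case: (boolP (x \in cyc)) => hx; [apply: ltnW; apply: hmu | rewrite hmu0].
rewrite /mu [X in _ < X](reindex_inj ninj) /=.
have hk : k' \in cyc by rewrite mem_head.
rewrite (bigD1 k') // [X in _ < X](bigD1 k') //.
rewrite -addSn; apply: leq_add; first exact: hmu.
by apply: leq_sum => x _; apply: hle.
Qed.

Lemma min_good r : good r -> exists r', good r' /\ acyc r'.
Proof.
suff H : forall N r, good r -> mu r <= N -> exists r', good r' /\ acyc r'.
  by move=> g; exact: (H (mu r) r g (leqnn _)).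
elim=> [|N IH] r0 g hN; (case ha: (acyc r0); first by exists r0; split);
  move/negbT: ha; move=> /forallPn [k /forallPn [k']];
  rewrite negb_imply negbK => /andP[h1 h2];
  have [r' [g' hlt]] := rotate g h1 h2.
- by move: hN; rewrite leqn0 => /eqP e; rewrite e in hlt.
- by apply: (IH r') => //; rewrite -ltnS; apply: leq_trans hN.
Qed.

Lemma shorten_good (r0 : 'I_n -> seq 'I_m) :
  (forall i, half_trek D B (y i) (r0 i)) ->
  (forall i j x, x \in r0 i -> x \in r0 j -> i = j) ->
  (forall i, last (y i) (r0 i) \in T) -> exists r, good r.
Proof.
move=> h1 h3 h4.
pose r i := if r0 i is h :: tl then h :: shorten h tl else [::].
have key i : [/\ half_trek D B (y i) (r i), uniq (r i), {subset r i <= r0 i} &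
                last (y i) (r i) = last (y i) (r0 i)].
  have := h1 i; rewrite /r /half_trek; case: (r0 i) => [|h tl] // /andP[hh pt].
  rewrite /=; case: (shortenP pt) => p' pp' up' sub'; split => //=; first by rewrite hh.
  by move=> z; rewrite !inE => /orP[->//|/sub' ->]; rewrite orbT.
exists r; split.
- by move=> i; case: (key i).
- by move=> i; case: (key i).
- move=> i j x hi hj; apply: (h3 i j x).
    by case: (key i) => _ _ hs _; apply: hs.
  by case: (key j) => _ _ hs _; apply: hs.
- by move=> i; case: (key i) => _ _ _ ->.
Qed.

Lemma good_of_ht (Y : {set 'I_m}) : Y = [set y i | i : 'I_n] ->
  ht_system D B Y T -> exists r, good r.
Proof.
move=> hY [s [hall [hu1 [hX [hu2 [hT [hpl hpr]]]]]]].
have hin i : y i \in map fst s.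
  have: y i \in Y by rewrite hY imset_f.
  by rewrite -hX inE.
pose idx i := index (y i) (map fst s).
pose t i := nth (y i, [::]) s (idx i).
have hidx i : idx i < size s by rewrite -(size_map fst) index_mem.
have ht1 i : (t i).1 = y i.
  by rewrite /t -(nth_map _ (y i)) ?nth_index.
have hts i : t i \in s by apply: mem_nth.
apply: (shorten_good (r0 := fun i => (t i).2)).
- by move=> i; have := allP hall _ (hts i); rewrite ht1.
- move=> i j x hi hj; apply: yinj.
  move/(pairwiseP (y i, [::])): hpr => hp.
  have disj a b : a < size s -> b < size s -> a < b ->
      [disjoint (nth (y i, [::]) s a).2 & (nth (y i, [::]) s b).2].
    by move=> ha hb hab; exact: (hp a b ha hb hab).
  case: (ltngtP (idx i) (idx j)) => hij.
  + have := disj _ _ (hidx i) (hidx j) hij.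
    rewrite -/(t i) (set_nth_default (y j, [::]) _ (hidx j)) -/(t j).
    by move/disjointFr/(_ hi); rewrite hj.
  + have := disj _ _ (hidx j) (hidx i) hij.
    rewrite -/(t i) (set_nth_default (y j, [::]) _ (hidx j)) -/(t j).
    by move/disjointFr/(_ hj); rewrite hi.
  + rewrite -(nth_index (y i) (hin i)) -(nth_index (y i) (hin j)).
    by rewrite -/(idx i) -/(idx j) hij.
- move=> i; have: ht_target (t i).1 (t i).2 \in T.
    by rewrite -hT inE; apply: map_f.
  by rewrite ht1.
Qed.
End Sys.


From mathcomp Require Import fingroup perm.

Section Point.
Variables (R : realFieldType) (m : nat) (D B : rel 'I_m) (n : nat) (y p : 'I_n -> 'I_m)
  (T : {set 'I_m}) (r : 'I_n -> seq 'I_m).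
Hypotheses (symB : symmetric B) (yinj : injective y) (pinj : injective p)
  (hTp : T = [set p j | j : 'I_n]) (gr : good D B y T r) (ac : acyc y r).

Lemma r_ht k : half_trek D B (y k) (r k). Proof. by case: gr. Qed.
Lemma r_uniq k : uniq (r k). Proof. by case: gr. Qed.
Lemma r_disj k k' x : x \in r k -> x \in r k' -> k = k'. Proof. by case: gr => _ _ h _; apply: h. Qed.
Lemma r_last k : last (y k) (r k) \in T. Proof. by case: gr. Qed.

Lemma r_cons k : exists h t, r k = h :: t.
Proof. by have := r_ht k; rewrite /half_trek; case: (r k) => [|h t] //; exists h, t. Qed.

Lemma hd_in k : hd y r k \in r k.
Proof. by case: (r_cons k) => h [t e]; rewrite /hd e mem_head. Qed.
Lemma index_hd k : index (hd y r k) (r k) = 0%N.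
Proof. by case: (r_cons k) => h [t e]; rewrite /hd e /= eqxx. Qed.
Lemma last_in k : last (y k) (r k) \in r k.
Proof. by case: (r_cons k) => h [t e]; rewrite e /= mem_last. Qed.

Definition bid k := hd y r k != y k.

Lemma bid_B k : bid k -> B (y k) (hd y r k).
Proof.
have := r_ht k; rewrite /bid /hd /half_trek; case: (r k) => [|h t] //=.
by case: eqP => //= _ /andP[].
Qed.

Lemma dir_y k : ~~ bid k -> y k = hd y r k.
Proof. by rewrite /bid negbK => /eqP. Qed.

Lemma bid_notin k : bid k -> y k \notin r k.
Proof.
move=> hb; apply/negP => hy; move: ac => /forallP /(_ k) /forallP /(_ k).
by move: hb; rewrite /bid /relr => ->; rewrite hy connect0.
Qed.

Lemma size_r k : size (r k) <= m.
Proof.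
rewrite -(card_uniqP (r_uniq k)); apply: leq_trans (max_card _) _.
by rewrite card_ord.
Qed.

Lemma index_lt x k : x \in r k -> index x (r k) < m.
Proof. by move=> hx; apply: leq_trans (size_r k); rewrite index_mem. Qed.

Definition bef x z := [exists k, (x \in r k) && (z \in r k) && (index x (r k) < index z (r k))].
Definition succ x z := [exists k, (x \in r k) && (z \in r k) && (index z (r k) == (index x (r k)).+1)].

Lemma befE x z k : x \in r k -> bef x z = (z \in r k) && (index x (r k) < index z (r k)).
Proof.
move=> hx; apply/existsP/idP => [[k' /andP[/andP[h1 h2] h3]]|/andP[h1 h2]].
  by rewrite (r_disj hx h1) h2 h3.
by exists k; rewrite hx h1 h2.
Qed.

Lemma succE x z k : x \in r k -> succ x z = (z \in r k) && (index z (r k) == (index x (r k)).+1).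
Proof.
move=> hx; apply/existsP/idP => [[k' /andP[/andP[h1 h2] h3]]|/andP[h1 h2]].
  by rewrite (r_disj hx h1) h2 h3.
by exists k; rewrite hx h1 h2.
Qed.

Lemma succ_D x z : succ x z -> D x z.
Proof.
case/existsP => k /andP[/andP[hx hz] /eqP hi].
have := r_ht k; rewrite /half_trek; case E: (r k) => [|h t] // /andP[_ pt].
have ht : size (r k) = (size t).+1 by rewrite E.
have hlt : index x (r k) < size t by rewrite -ltnS -ht -hi index_mem.
have := (pathP x pt) _ hlt.
have e1 : nth x (h :: t) (index x (r k)) = x by rewrite -E nth_index.
have e2 : nth x t (index x (r k)) = z.
  by rewrite -[t]/(behead (h :: t)) nth_behead -E -hi nth_index.
by rewrite e1 e2.
Qed.
Local Open Scope ring_scope.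

Definition Lam : 'M[R]_m := \matrix_(x, z) (succ x z)%:R.
Definition Mm : 'M[R]_m := \matrix_(x, z) ((x == z) || bef x z)%:R.

Lemma LamM : (1%:M - Lam) *m Mm = 1%:M.
Proof.
apply/matrixP => x z; rewrite mulmxBl mul1mx !mxE.
case: (boolP [exists k, (x \in r k) && ((index x (r k)).+1 < size (r k))%N]).
- case/existsP => k /andP[hx hs].
  set w0 := nth x (r k) (index x (r k)).+1.
  have hw0 : w0 \in r k by apply: mem_nth.
  have iw0 : index w0 (r k) = (index x (r k)).+1 by apply: index_uniq => //; apply: r_uniq.
  have hsucc w : succ x w = (w == w0).
    rewrite (succE _ hx); apply/andP/eqP => [[hw /eqP hi]|->]; last by rewrite hw0 iw0.
    by rewrite -(nth_index x hw) hi.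
  rewrite (bigD1 w0) //= big1 ?addr0; last first.
    by move=> w /negbTE hw; rewrite /Lam /Mm !mxE hsucc hw mul0r.
  rewrite /Lam /Mm !mxE hsucc eqxx mul1r (befE _ hx) (befE _ hw0) iw0.
  case: eqP => [<-|nxz] /=.
    have -> : (w0 == x) = false.
      by apply/eqP => e; move: iw0; rewrite e; lia.
    have -> : ((index x (r k)).+1 < index x (r k))%N = false by lia.
    by rewrite andbF subr0.
  case hz: (z \in r k) => /=.
    have -> : (w0 == z) = ((index x (r k)).+1 == index z (r k)).
      rewrite -iw0; apply/eqP/eqP => [->//|]; exact: index_inj.
    by rewrite -leq_eqVlt subrr.
  have -> : (w0 == z) = false by apply/eqP => e; rewrite -e hw0 in hz.
  by rewrite subrr.
- move=> hns.
  have hs w : succ x w = false.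
    case E: (succ x w) => //; move: E; rewrite /succ; case/existsP => k /andP[/andP[hx hw] /eqP hi]; case/negP: hns.
    by apply/existsP; exists k; rewrite hx -hi index_mem hw.
  have hb : bef x z = false.
    case E: (bef x z) => //; move: E; rewrite /bef; case/existsP => k /andP[/andP[hx hz] hi]; case/negP: hns.
    have hz2 : (index z (r k) < size (r k))%N by rewrite index_mem.
    by apply/existsP; exists k; rewrite hx /=; lia.
  by rewrite big1 => [|w _]; [rewrite hb orbF subr0 | rewrite /Lam !mxE hs mul0r].
Qed.

Lemma invLam : invmx (1%:M - Lam) = Mm.
Proof.
have [hu _] := mulmx1_unit LamM.
by rewrite -[RHS](mulKmx hu Mm) LamM mulmx1.
Qed.

Definition uu k (a : 'I_m) : R := (a == y k)%:R + (a == hd y r k)%:R.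
Definition U k : 'cV[R]_m := \col_a uu k a.
Definition Om : 'M[R]_m := 1%:M + \sum_(k | bid k) (U k *m (U k)^T).

Lemma OmE a b : Om a b = (a == b)%:R + \sum_(k | bid k) uu k a * uu k b.
Proof.
rewrite /Om !mxE summxE; congr (_ + _); apply: eq_bigr => k _.
by rewrite !mxE big_ord1 !mxE.
Qed.

Lemma uu_ge0 k a : 0 <= uu k a.
Proof. by rewrite /uu addr_ge0 ?ler0n. Qed.

Lemma Om_ge0 a b : 0 <= Om a b.
Proof.
rewrite OmE addr_ge0 ?ler0n // sumr_ge0 // => k _.
by rewrite mulr_ge0 ?uu_ge0.
Qed.

Lemma Mm_ge0 a b : 0 <= Mm a b.
Proof. by rewrite /Mm mxE ler0n. Qed.

Lemma Om_sym : Om^T = Om.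
Proof.
apply/matrixP => a b; rewrite mxE !OmE eq_sym; congr (_ + _).
by apply: eq_bigr => k _; rewrite mulrC.
Qed.

Lemma uu_nz k a : uu k a != 0 -> (a == y k) || (a == hd y r k).
Proof.
rewrite /uu; case: (a == y k); case: (a == hd y r k) => //=.
by rewrite addr0 eqxx.
Qed.

Lemma Om_zero a b : a != b -> ~~ B a b -> Om a b = 0.
Proof.
move=> hab hB; rewrite OmE (negbTE hab) add0r big1 // => k hk.
apply/eqP; apply: contraR hB; rewrite mulf_eq0 negb_or => /andP[/uu_nz ha /uu_nz hb].
have hB0 := bid_B hk.
case/orP: ha => /eqP ea; case/orP: hb => /eqP eb.
- by rewrite ea eb eqxx in hab.
- by rewrite ea eb.
- by rewrite ea eb symB.
- by rewrite ea eb eqxx in hab.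
Qed.

Lemma Om_pd (x : 'cV[R]_m) : x != 0 -> 0 < (x^T *m Om *m x) ord0 ord0.
Proof.
move=> hx.
have -> : x^T *m Om *m x = x^T *m x +
    \sum_(k | bid k) ((x^T *m U k) *m (x^T *m U k)^T).
  rewrite /Om mulmxDr mulmx1 mulmxDl; congr (_ + _).
  rewrite mulmx_sumr mulmx_suml; apply: eq_bigr => k _.
  by rewrite trmx_mul trmxK !mulmxA.
rewrite mxE summxE.
apply: lt_le_trans (_ : 0 < (x^T *m x) 0 0) _.
  have [a ha] : exists a, x a 0 != 0.
    apply/existsP; move: hx; apply: contraR; rewrite negb_exists => /forallP h.
    apply/eqP/matrixP => a b; rewrite (ord1 b) mxE; exact/eqP/negPn.
  rewrite mxE (bigD1 a) //= !mxE; apply: ltr_pwDl.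
    by rewrite -expr2 exprn_even_gt0 //= ha orbT.
  by apply: sumr_ge0 => c _; rewrite !mxE -expr2 sqr_ge0.
rewrite lerDl sumr_ge0 // => k _.
by rewrite !mxE big_ord1 !mxE -expr2 sqr_ge0.
Qed.

Lemma point_Theta : in_Theta D B Lam Om.
Proof.
split; split.
- move=> a b hD; rewrite /Lam mxE; case E: (succ a b) => //.
  by rewrite (succ_D E) in hD.
- exact: (mulmx1_unit LamM).1.
- exact: Om_sym.
- split; first exact: Om_zero.
  exact: Om_pd.
Qed.

Definition K := Om *m Mm.

Lemma FmatE H i j : Fmat y p H Lam Om i j =
  if y i \in H then K (y i) (p j) else (Mm^T *m K) (y i) (p j).
Proof.
have e1 : (1%:M - Lam)^T *m Sigma Lam Om = K.
  rewrite /Sigma invLam /K !mulmxA -trmx_mul (mulmx1C LamM) trmx1 mul1mx //.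
have e2 : Sigma Lam Om = Mm^T *m K by rewrite /Sigma invLam /K mulmxA.
by rewrite /Fmat mxE e1 e2.
Qed.

Lemma K_ge0 a b : 0 <= K a b.
Proof. by rewrite /K mxE sumr_ge0 // => c _; rewrite mulr_ge0 ?Om_ge0 ?Mm_ge0. Qed.

Lemma MK_ge0 a b : 0 <= (Mm^T *m K) a b.
Proof. by rewrite mxE sumr_ge0 // => c _; rewrite mxE mulr_ge0 ?K_ge0 ?Mm_ge0. Qed.

Lemma Fmat_ge0 H i j : 0 <= Fmat y p H Lam Om i j.
Proof. by rewrite FmatE; case: ifP => _; [apply: K_ge0 | apply: MK_ge0]. Qed.

Lemma Om_yhd i : 1 <= Om (y i) (hd y r i).
Proof.
rewrite OmE; case: (boolP (bid i)) => hb.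
  have -> : (y i == hd y r i) = false by apply/negbTE; rewrite eq_sym.
  rewrite add0r (bigD1 i) //= /uu eqxx eq_sym (negbTE hb) eqxx /= add0r addr0 mulr1.
  rewrite lerDl sumr_ge0 // => k _; rewrite mulr_ge0 // addr_ge0 // ler0n.
rewrite -(dir_y hb) eqxx lerDl sumr_ge0 // => k _; rewrite mulr_ge0 // addr_ge0 // ler0n.
Qed.

Lemma Mm_hdlast i : Mm (hd y r i) (last (y i) (r i)) = 1.
Proof.
rewrite /Mm mxE; case: eqP => //= ne.
suff -> : bef (hd y r i) (last (y i) (r i)) by [].
rewrite (befE _ (hd_in i)) last_in index_hd /= lt0n.
apply/eqP => e; apply: ne.
exact: (index_inj (y i) (hd_in i) (last_in i) (etrans (index_hd i) (esym e))).
Qed.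

Lemma K_diag i : 1 <= K (y i) (last (y i) (r i)).
Proof.
rewrite /K mxE (bigD1 (hd y r i)) //= Mm_hdlast mulr1.
apply: le_trans (Om_yhd i) _; rewrite lerDl sumr_ge0 // => c _.
by rewrite mulr_ge0 ?Om_ge0 ?Mm_ge0.
Qed.

Lemma Fmat_diag H i j : p j = last (y i) (r i) -> 1 <= Fmat y p H Lam Om i j.
Proof.
move=> e; rewrite FmatE e; case: ifP => _; first exact: K_diag.
rewrite mxE (bigD1 (y i)) //= mxE /Mm mxE eqxx mul1r.
apply: le_trans (K_diag i) _; rewrite lerDl sumr_ge0 // => c _.
by rewrite mxE mulr_ge0 ?K_ge0 ?Mm_ge0.
Qed.

Lemma sum_nz (I : finType) (P : pred I) (F : I -> R) :
  \sum_(k | P k) F k != 0 -> exists k, P k && (F k != 0).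
Proof.
move=> h; apply/existsP; apply: contraR h; rewrite negb_exists => /forallP h.
by rewrite big1 // => k hk; move: (h k); rewrite hk /= => /negPn /eqP.
Qed.

Lemma Mm_nz a b : Mm a b != 0 -> (a == b) || bef a b.
Proof. by rewrite /Mm mxE; case: (_ || _) => //=; rewrite eqxx. Qed.

Lemma Fmat_supp H i j : Fmat y p H Lam Om i j != 0 ->
  exists a b, [/\ (a == y i) || bef a (y i), Om a b != 0 & (b == p j) || bef b (p j)].
Proof.
have hK a : K a (p j) != 0 -> exists b, Om a b != 0 /\ ((b == p j) || bef b (p j)).
  rewrite /K mxE => /sum_nz [b /= hb]; exists b.
  by move: hb; rewrite mulf_eq0 negb_or => /andP[h1 /Mm_nz h2].
rewrite FmatE; case: ifP => _.
  by move=> /hK [b [h1 h2]]; exists (y i), b; rewrite eqxx.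
rewrite mxE => /sum_nz [a /= ha]; move: ha; rewrite mxE mulf_eq0 negb_or.
case/andP => /Mm_nz h1 /hK [b [h2 h3]]; exists a, b; split => //.
Qed.

Definition g k := #|[set x | connect (relr y r) k x]|.

Lemma g_lt k k' : relr y r k k' -> (g k' < g k)%N.
Proof.
move=> hk; apply: proper_card; apply/properP; split.
  apply/subsetP => x; rewrite !inE => h; exact: connect_trans (connect1 hk) h.
exists k; rewrite !inE ?connect0 //.
by move: ac => /forallP/(_ k)/forallP/(_ k')/implyP/(_ hk).
Qed.

Definition phi i := if [pick k | y i \in r k] is Some k
  then (g k * m + index (y i) (r k) + 1)%N else 0%N.

Lemma phiE i k : y i \in r k -> phi i = (g k * m + index (y i) (r k) + 1)%N.
Proof.
rewrite /phi; case: pickP => [k' hk'|h] hy; first by rewrite (r_disj hk' hy).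
by rewrite h in hy.
Qed.

Lemma phi_dir c : ~~ bid c -> phi c = (g c * m + 1)%N.
Proof. by move=> hc; rewrite (phiE (k := c)) ?dir_y ?index_hd ?hd_in ?addn0. Qed.

Lemma phi_bid c : bid c -> (phi c <= g c * m)%N.
Proof.
move=> hc; rewrite /phi; case: pickP => [k hk|//].
have hlt : (g k < g c)%N by apply: g_lt; apply/andP; split.
have hi := index_lt hk.
rewrite -addnA addn1; apply: (@leq_trans (g k * m + m)%N); first by rewrite leq_add2l.
by rewrite -mulSnr leq_mul2r hlt orbT.
Qed.

Lemma Om_supp a b : Om a b != 0 -> a = b \/ exists l, bid l /\
   ((a = y l /\ b = hd y r l) \/ (a = hd y r l /\ b = y l)).
Proof.
rewrite OmE; case: (eqVneq a b) => [->|nab]; first by left.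
rewrite add0r => /sum_nz [l /andP[hl]]; rewrite mulf_eq0 negb_or.
case/andP => /uu_nz ha /uu_nz hb; right; exists l; split => //.
case/orP: ha => /eqP ea; case/orP: hb => /eqP eb.
- by rewrite ea eb eqxx in nab.
- by left.
- by right.
- by rewrite ea eb eqxx in nab.
Qed.

Lemma supp i c a b : i != c -> (a == y i) || bef a (y i) -> Om a b != 0 ->
  (b == last (y c) (r c)) || bef b (last (y c) (r c)) -> (phi c < phi i)%N.
Proof.
move=> hic ha hO hb.
have hm : (0 < m)%N by case: (y i) => [k hk]; apply: leq_ltn_trans hk.
have hbc : b \in r c.
  case/orP: hb => [/eqP -> | ]; first exact: last_in.
  by rewrite /bef; case/existsP => k /andP[/andP[hb hl] _]; rewrite (r_disj (last_in c) hl).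
have hA k : a \in r k -> y i \in r k /\ (index a (r k) <= index (y i) (r k))%N.
  move=> hak; case/orP: ha => [/eqP <- | ]; first by [].
  by rewrite (befE _ hak) => /andP[h1 h2]; split => //; apply: ltnW.
have yne : y i != y c by apply: contra hic => /eqP /yinj ->.
case: (Om_supp hO) => [eab | [l [hl [[ea eb] | [ea eb]]]]].
- rewrite -eab in hbc; have [hyc _] := hA c hbc.
  rewrite (phiE hyc); case: (boolP (bid c)) => hbd.
    apply: leq_ltn_trans (phi_bid hbd) _.
    by rewrite -addnA addn1 -[X in (X < _)%N]addn0 ltn_add2l.
  rewrite (phi_dir hbd).
  have : index (y i) (r c) != 0%N.
    apply/eqP => e; move: yne; rewrite (dir_y hbd).
    by rewrite (index_inj (y i) hyc (hd_in c) (etrans e (esym (index_hd c)))) eqxx.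
  by rewrite -!addnA ltn_add2l !addn1 ltnS lt0n.
- have elc : l = c by apply: r_disj (hd_in l) _; rewrite -eb.
  subst l; move: ha; rewrite ea eq_sym (negbTE yne) /=.
  rewrite /bef; case/existsP => k /andP[/andP[h1 h2] h3].
  by rewrite (phiE h1) (phiE h2) ltn_add2r ltn_add2l.
- have hrel : relr y r l c by apply/andP; split => //; rewrite -eb.
  have hg := g_lt hrel.
  have [hyl _] := hA l (etrans (congr1 (fun z => z \in r l) ea) (hd_in l)).
  have hgm : (g c * m < g l * m)%N by rewrite ltn_pmul2r.
  rewrite (phiE hyl); case: (boolP (bid c)) => hbd.
    apply: leq_ltn_trans (phi_bid hbd) _; apply: leq_trans hgm _.
    by rewrite -addnA leq_addr.
  rewrite (phi_dir hbd) ltn_add2r.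
  by apply: leq_trans hgm _; rewrite leq_addr.
Qed.

Lemma det_phi k (C : 'M[R]_k) (f : 'I_k -> nat) :
  (forall i c, i != c -> C i c != 0 -> (f c < f i)%N) -> \det C = \prod_i C i i.
Proof.
move=> hf; rewrite /determinant (bigD1 (1%g : 'S_k)) //= [X in _ + X]big1.
  by rewrite addr0 odd_perm1 expr0 mul1r; apply: eq_bigr => i _; rewrite perm1.
move=> s hs; apply/eqP; rewrite mulf_eq0; apply/orP; right; apply/negPn/negP => hnz.
have hall i : C i (s i) != 0.
  by apply: contra hnz => /eqP h; rewrite (bigD1 i) //= h mul0r.
have [i0 hi0] : exists i0, s i0 != i0.
  apply/existsP; apply: contraR hs; rewrite negb_exists => /forallP h.
  by apply/eqP/permP => i; rewrite perm1; apply/eqP/negPn.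
have hle i : (f (s i) <= f i)%N.
  case: (eqVneq i (s i)) => [<-//| ne]; apply: ltnW; exact: hf _ _ ne (hall i).
have : (\sum_i f (s i) < \sum_i f i)%N.
  rewrite (bigD1 i0) //= [X in (_ < X)%N](bigD1 i0) //= -addSn; apply: leq_add.
    by apply: hf; [rewrite eq_sym | apply: hall].
  by apply: leq_sum => i _; apply: hle.
by rewrite [X in (_ < X)%N](reindex_inj (@perm_inj _ s)) /= ltnn.
Qed.

Lemma point_det H : \det (Fmat y p H Lam Om) != 0.
Proof.
pose tau c := odflt c [pick j | p j == last (y c) (r c)].
have htau c : p (tau c) = last (y c) (r c).
  have := r_last c; rewrite hTp => /imsetP [j _ ej].
  rewrite /tau; case: pickP => [j' /eqP //|h].
  by have := h j; rewrite ej eqxx.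
have tau_inj : injective tau.
  move=> c c' e; have := htau c; rewrite e htau => el.
  have h1 := last_in c'; rewrite el in h1; exact: r_disj (last_in c) h1.
pose s := perm tau_inj.
pose F := Fmat y p H Lam Om.
have hdet : \det (col_perm s F) = \det F * (-1) ^+ (s^-1)%g.
  by rewrite col_permE det_mulmx det_perm.
suff : \det (col_perm s F) != 0 by rewrite hdet mulf_eq0 negb_or => /andP[].
rewrite (@det_phi _ _ phi).
  rewrite gt_eqF // prodr_gt0 // => i _.
  by rewrite mxE permE; apply: lt_le_trans (Fmat_diag H (htau i)); rewrite ltr01.
move=> i c hic; rewrite mxE permE => /Fmat_supp [a [b [ha hO hb]]].
by apply: (supp hic ha hO); rewrite -htau.
Qed.

End Point.

Unset Implicit Arguments.
Local Open Scope ring_scope.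

Theorem mainTheorem13 (R : realFieldType) (m : nat) (D B : rel 'I_m) (v : 'I_m)
    (Y : {set 'I_m}) (n : nat) (y p : 'I_n -> 'I_m) (H : {set 'I_m}) :
  mixed_graph D B ->
  Y \subset ~: (v |: sib B v) ->
  #|Y| = n -> #|pa D v| = n ->
  injective y -> injective p ->
  Y = [set y i | i : 'I_n] -> pa D v = [set p j | j : 'I_n] ->
  (forall w, w \in H <-> htr D B v w) ->
  HTC D B v Y ->
  generically_nonzero D B (fun L O : 'M[R]_m =>
    \det (\matrix_(i < n, j < n)
            if y i \in H then ((1%:M - L)^T *m Sigma L O) (y i) (p j)
            else Sigma L O (y i) (p j))).
Proof.
move=> [_ [_ symB]] _ _ _ yinj pinj hY hpa _ [_ [_ hsys]].
have [r0 g0] := good_of_ht yinj hY hsys.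
have [r [gr ac]] := min_good g0.
apply: (@gen_of_point R m D B n (fun L O => \det (Fmat y p H L O))
          (fun L O => \det (Gmat y p H L O))).
- exact: Gmat_poly.
- by move=> L O [[_ hu] _]; apply: GF_rel.
- exists (Lam R r), (Om R y r); split; first exact: point_Theta symB gr ac.
  exact: point_det yinj hpa gr ac H.
Qed.
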